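(* If graded posets $(P,\le_P)$ and $(Q,\le_Q)$ each admit a symmetric boolean decomposition, then the product poset $(P\times Q,\le_{P\times Q})$ admits a symmetric boolean decomposition.
   Context: The product order is $(p,q)\le_{P\times Q}(p',q')$ iff $p\le_P p'$ and $q\le_Q q'$; if $P,Q$ are graded of ranks $m,n$ then $P\times Q$ is graded of rank $m+n$ with $\mathrm{rk}(p,q)=\mathrm{rk}(p)+\mathrm{rk}(q)$. Let $\mathrm B_m$ be the boolean lattice of subsets of an $m$-element set. For a graded poset $R$ of rank $N$, a partition $\{R_1,\dots,R_k\}$ of $R$ is a symmetric boolean decomposition if for each $i$ there is an integer $j$ with $0\le j\le N/2$ and a bijection $\rho_i:\mathrm B_{N-2j}\to R_i$ that sends cover relations of $\mathrm B_{N-2j}$ to cover relations of $R$ and sends elements of rank $r$ to elements of rank $j+r$ in $R$. *)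

(* Defs.v *)
From mathcomp Require Import all_boot.
Set Implicit Arguments. Unset Strict Implicit. Unset Printing Implicit Defensive.

Definition strict (T : eqType) (le : rel T) (x y : T) : bool := le x y && (x != y).

Definition covers (T : finType) (le : rel T) (x y : T) : bool :=
  strict le x y && [forall z, ~~ (strict le x z && strict le z y)].

Definition is_minimal (T : finType) (le : rel T) (x : T) : Prop :=
  forall y, le y x -> y = x.
Definition is_maximal (T : finType) (le : rel T) (x : T) : Prop :=
  forall y, le x y -> y = x.

Definition graded (T : finType) (le : rel T) (rk : T -> nat) (N : nat) : Prop :=
  [/\ reflexive le, antisymmetric le, transitive le &
      [/\ (forall x y, covers le x y -> rk y = (rk x).+1),
      (forall x, is_minimal le x -> rk x = 0) &
      (forall x, is_maximal le x -> rk x = N)]].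

(* The boolean lattice B_m : subsets of 'I_m ordered by inclusion, rank = cardinality. *)
Definition B_le (m : nat) : rel {set 'I_m} := fun A B => A \subset B.

Definition sym_bool_block (T : finType) (le : rel T) (rk : T -> nat) (N : nat)
    (S : {set T}) : Prop :=
  exists j : nat, 2 * j <= N /\
  exists rho : {set 'I_(N - 2 * j)} -> T,
    [/\ injective rho,
        S = [set rho A | A : {set 'I_(N - 2 * j)}],
        (forall A B, covers (@B_le (N - 2 * j)) A B -> covers le (rho A) (rho B)) &
        (forall A, rk (rho A) = j + #|A|)].

Definition has_sbd (T : finType) (le : rel T) (rk : T -> nat) (N : nat) : Prop :=
  exists Pt : {set {set T}},
    partition Pt [set: T] /\ forall S, S \in Pt -> sym_bool_block le rk N S.

Definition prod_le (T1 T2 : finType) (le1 : rel T1) (le2 : rel T2) : rel (T1 * T2) :=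
  fun x y => le1 x.1 y.1 && le2 x.2 y.2.
Definition prod_rk (T1 T2 : finType) (rk1 : T1 -> nat) (rk2 : T2 -> nat) (x : T1 * T2) : nat :=
  rk1 x.1 + rk2 x.2.

(* Main.v *)
Require Import Defs.
From mathcomp Require Import all_boot.
From mathcomp Require Import zify.
Set Implicit Arguments. Unset Strict Implicit. Unset Printing Implicit Defensive.

Section Split.
Variables a b : nat.
Definition lsp (A : {set 'I_(a+b)}) : {set 'I_a} := [set i | lshift b i \in A].
Definition rsp (A : {set 'I_(a+b)}) : {set 'I_b} := [set i | @rshift a b i \in A].
Definition glue (B1 : {set 'I_a}) (B2 : {set 'I_b}) : {set 'I_(a+b)} :=
  lshift b @: B1 :|: @rshift a b @: B2.

Lemma mem_gl B1 B2 i : (lshift b i \in glue B1 B2) = (i \in B1).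
Proof.
rewrite /glue inE mem_imset; last exact: lshift_inj.
case: (i \in B1) => //=; apply/imsetP => [[j _ /eqP]]; by rewrite eq_lrshift.
Qed.

Lemma mem_gr B1 B2 i : (rshift a i \in glue B1 B2) = (i \in B2).
Proof.
rewrite /glue inE (mem_imset _ _ (@rshift_inj a b)).
case: (i \in B2); rewrite ?orbT // orbF; apply/imsetP => [[j _ /eqP]].
by rewrite eq_sym eq_lrshift.
Qed.

Lemma glueK1 B1 B2 : lsp (glue B1 B2) = B1.
Proof. by apply/setP => i; rewrite inE mem_gl. Qed.
Lemma glueK2 B1 B2 : rsp (glue B1 B2) = B2.
Proof. by apply/setP => i; rewrite inE mem_gr. Qed.

Lemma spK (A : {set 'I_(a+b)}) : glue (lsp A) (rsp A) = A.
Proof.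
apply/setP => x; rewrite -(splitK x); case: (split x) => i /=.
  by rewrite mem_gl inE.
by rewrite mem_gr inE.
Qed.

Lemma card_glue B1 B2 : #|glue B1 B2| = #|B1| + #|B2|.
Proof.
rewrite /glue cardsU !card_imset; try exact: lshift_inj; try exact: rshift_inj.
suff -> : lshift b @: B1 :&: @rshift a b @: B2 = set0 by rewrite cards0 subn0.
apply/setP => x; rewrite !inE; apply/negP => /andP [/imsetP [i _ ->] /imsetP [j _ /eqP]].
by rewrite eq_lrshift.
Qed.

Lemma card_sp (A : {set 'I_(a+b)}) : #|A| = #|lsp A| + #|rsp A|.
Proof. by rewrite -{1}(spK A) card_glue. Qed.

Lemma lsp_sub (A B : {set 'I_(a+b)}) : A \subset B -> lsp A \subset lsp B.
Proof. move/subsetP => h; apply/subsetP => i; rewrite !inE; exact: h. Qed.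
Lemma rsp_sub (A B : {set 'I_(a+b)}) : A \subset B -> rsp A \subset rsp B.
Proof. move/subsetP => h; apply/subsetP => i; rewrite !inE; exact: h. Qed.
End Split.

Lemma coversB m (A B : {set 'I_m}) :
  covers (@B_le m) A B -> A \subset B /\ #|B| = #|A|.+1.
Proof.
rewrite /covers /strict /B_le => /andP [/andP [sAB nAB] /forallP h].
have pAB : A \proper B by rewrite properEneq nAB sAB.
split => //.
have lt := proper_card pAB.
case: (properP pAB) => _ [x xB xA].
have := h (x |: A); apply: contraNeq => hne.
have sxA : A \subset x |: A by apply/subsetP => y yA; rewrite !inE yA orbT.
have sxB : x |: A \subset B by apply/subsetP => y; rewrite !inE => /orP [/eqP ->|] //; move/subsetP: sAB; apply.
rewrite sxA sxB /=; apply/andP; split.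
  apply/eqP => e; move: xA; by rewrite e !inE eqxx.
apply/eqP => e; move: hne; rewrite -e cardsU1 (negbTE xA) /=.
by rewrite eqxx.
Qed.

Lemma Bcovers m (A B : {set 'I_m}) :
  A \subset B -> #|B| = #|A|.+1 -> covers (@B_le m) A B.
Proof.
move=> sAB cB; rewrite /covers /strict /B_le sAB /=; apply/andP; split.
  by apply/eqP => e; move: cB; rewrite e; lia.
apply/forallP => z; apply/negP => /andP [/andP [s1 n1] /andP [s2 n2]].
have c1 : #|A| < #|z| by apply: proper_card; rewrite properEneq n1 s1.
have c2 : #|z| < #|B| by apply: proper_card; rewrite properEneq n2 s2.
lia.
Qed.

Section Prod.
Variables (P Q : finType) (leP : rel P) (leQ : rel Q).

Lemma covers_l p p' q : reflexive leQ -> antisymmetric leQ ->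
  covers leP p p' -> covers (prod_le leP leQ) (p, q) (p', q).
Proof.
move=> rQ aQ; rewrite /covers /strict /prod_le /= => /andP [/andP [l ne] /forallP h].
rewrite l rQ /=; apply/andP; split.
  by apply: contra ne => /eqP [->].
apply/forallP => [[z1 z2]] /=; apply/negP => /andP [/andP [/andP [l1 l2] n1] /andP [/andP [l3 l4] n2]].
have e : z2 = q by apply: aQ; rewrite l4 l2.
subst z2.
have := h z1; rewrite l1 l3 /=.
have -> : p != z1 by apply: contra n1 => /eqP ->.
by have -> : z1 != p' by apply: contra n2 => /eqP ->.
Qed.

Lemma covers_r p q q' : reflexive leP -> antisymmetric leP ->
  covers leQ q q' -> covers (prod_le leP leQ) (p, q) (p, q').
Proof.
move=> rP aP; rewrite /covers /strict /prod_le /= => /andP [/andP [l ne] /forallP h].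
rewrite l rP /=; apply/andP; split.
  by apply: contra ne => /eqP [->].
apply/forallP => [[z1 z2]] /=; apply/negP => /andP [/andP [/andP [l1 l2] n1] /andP [/andP [l3 l4] n2]].
have e : z1 = p by apply: aP; rewrite l3 l1.
subst z1.
have := h z2; rewrite l2 l4 /=.
have -> : q != z2 by apply: contra n1 => /eqP ->.
by have -> : z2 != q' by apply: contra n2 => /eqP ->.
Qed.

Lemma block_prod (rkP : P -> nat) (rkQ : Q -> nat) a b N j k
  (rP : {set 'I_a} -> P) (rQ : {set 'I_b} -> Q) :
  N = a + b ->
  reflexive leP -> antisymmetric leP -> reflexive leQ -> antisymmetric leQ ->
  injective rP -> injective rQ ->
  (forall A B, covers (@B_le a) A B -> covers leP (rP A) (rP B)) ->
  (forall A B, covers (@B_le b) A B -> covers leQ (rQ A) (rQ B)) ->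
  (forall A, rkP (rP A) = j + #|A|) ->
  (forall A, rkQ (rQ A) = k + #|A|) ->
  exists rho : {set 'I_N} -> P * Q,
    [/\ injective rho,
        setX [set rP A | A : {set 'I_a}] [set rQ A | A : {set 'I_b}]
          = [set rho A | A : {set 'I_N}],
        (forall A B, covers (@B_le N) A B -> covers (prod_le leP leQ) (rho A) (rho B)) &
        (forall A, prod_rk rkP rkQ (rho A) = (j + k) + #|A|)].
Proof.
move=> -> rfP aP rfQ aQ iP iQ cP cQ kP kQ.
exists (fun A => (rP (lsp A), rQ (rsp A))); split.
- move=> A B [/iP e1 /iQ e2]; by rewrite -(spK A) -(spK B) e1 e2.
- apply/setP => [[x y]]; rewrite !inE; apply/andP/imsetP.
    move=> [/imsetP [B1 _ E1] /imsetP [B2 _ E2]]; rewrite /= in E1 E2; rewrite E1 E2.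
    by exists (glue B1 B2); rewrite // glueK1 glueK2.
  by move=> [A _ [-> ->]]; split; apply/imsetP; eexists.
- move=> A B /coversB [sAB cB].
  have s1 := lsp_sub sAB; have s2 := rsp_sub sAB.
  move: cB; rewrite (card_sp A) (card_sp B) => cB.
  have c1 := subset_leq_card s1; have c2 := subset_leq_card s2.
  have [e1|e1] : #|lsp B| = #|lsp A| \/ #|lsp B| = (#|lsp A|).+1 by lia.
  + have E : lsp A = lsp B by apply/eqP; rewrite eqEcard s1 e1 leqnn.
    rewrite E; apply: covers_r => //; apply: cQ; apply: Bcovers => //; lia.
  + have E : rsp A = rsp B by apply/eqP; rewrite eqEcard s2; lia.
    rewrite E; apply: covers_l => //; apply: cP; exact: Bcovers.
- move=> A; rewrite /prod_rk /= kP kQ (card_sp A); lia.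
Qed.
End Prod.

Theorem mainTheorem16 (P Q : finType) (leP : rel P) (leQ : rel Q)
    (rkP : P -> nat) (rkQ : Q -> nat) (m n : nat) :
  graded leP rkP m -> graded leQ rkQ n ->
  has_sbd leP rkP m -> has_sbd leQ rkQ n ->
  has_sbd (prod_le leP leQ) (prod_rk rkP rkQ) (m + n).
Proof.
move=> [rfP aP _ _] [rfQ aQ _ _] [PtP [pP hP]] [PtQ [pQ hQ]].
move: (pP) (pQ) => /and3P [/eqP cvP tP n0P] /and3P [/eqP cvQ tQ n0Q].
exists [set setX S T | S in PtP, T in PtQ]; split.
- apply/and3P; split.
  + apply/eqP/setP => [[p q]]; rewrite !inE; apply/bigcupP.
    have pin : p \in cover PtP by rewrite cvP inE.
    have qin : q \in cover PtQ by rewrite cvQ inE.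
    move/bigcupP: pin => [S SP pS]; move/bigcupP: qin => [T TQ qT].
    exists (setX S T); first by apply/imset2P; exists S T.
    by rewrite inE pS qT.
  + apply/trivIsetP => X Y /imset2P [S T SP TQ ->] /imset2P [S' T' SP' TQ' ->] ne.
    rewrite -setI_eq0; apply/eqP/setP => [[p q]]; rewrite !inE.
    apply/negP => /andP [/andP [pS qT] /andP [pS' qT']].
    move: ne; rewrite -(def_pblock tP SP pS) -(def_pblock tP SP' pS').
    by rewrite -(def_pblock tQ TQ qT) -(def_pblock tQ TQ' qT') eqxx.
  + apply/imset2P => [[S T SP TQ e]].
    have /set0Pn [p pS] : S != set0 by apply: contraNneq n0P => <-.
    have /set0Pn [q qT] : T != set0 by apply: contraNneq n0Q => <-.
    have : (p, q) \in setX S T by rewrite inE pS qT.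
    by rewrite -e inE.
- move=> X /imset2P [S T SP TQ ->].
  have [j [hj [rP [iP eS cP kP]]]] := hP S SP.
  have [k [hk [rQ [iQ eT cQ kQ]]]] := hQ T TQ.
  exists (j + k); split; first lia.
  have eN : m + n - 2 * (j + k) = (m - 2 * j) + (n - 2 * k) by lia.
  have [rho [ir er cr kr]] := @block_prod _ _ leP leQ rkP rkQ _ _ _ j k rP rQ eN rfP aP rfQ aQ iP iQ cP cQ kP kQ.
  exists rho; split => //; by rewrite eS eT.
Qed.
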